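(* Fix $i\in\{1,2,3\}$ and constants $\sigma>0,\lambda>0,\rho>0$ with $\rho^{-2}\sigma<1$ and $\rho\le\lambda-2\rho^{-1}\sigma(1-\rho^{-2}\sigma)^{-1}$. Suppose that for some $p\in\mathbb{Z}_{>0}$ the matrix $\Theta_{p,i}$ satisfies $\Theta_{p,i}^{12}\Theta_{p,i}^{21}\le\sigma I$, $\Theta_{p,i}^{21}\Theta_{p,i}^{12}\le\sigma I$, $\Theta_{p,i}^{11}+\Theta_{p,i}^{22}\ge\lambda I$. Then for all $k\in\mathbb{Z}_{>0}$, $\Theta_{(k+1)p,i}^{11}\le\Theta_{kp,i}^{11}$, $\Theta_{(k+1)p,i}^{22}\le\Theta_{kp,i}^{22}$, $\Theta_{(k+1)p,i}^{12}\Theta_{(k+1)p,i}^{21}\le\Theta_{kp,i}^{12}\Theta_{kp,i}^{21}$, and $\Theta_{(k+1)p,i}^{21}\Theta_{(k+1)p,i}^{12}\le\Theta_{kp,i}^{21}\Theta_{kp,i}^{12}$.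
   Context: For the linear regulator problem with dynamics $x_{k+1}=Ax_k+Bw_k$ ($x_k\in\mathbb{R}^n$), running payoff $\tfrac12x^T\Phi x-\tfrac{\gamma^2}{2}|w|^2$ and basis functions $\psi^1(x,z)=z^Tx$, $\psi^2(x,z)=-\tfrac12(x-z)^TM(x-z)$, $\psi^3(x,z)=\delta(x-z)$, let $\mathrm{S}_{k,i}(x,z)$ be the $k$-step dynamic programming evolution of $\psi^i(\cdot,z)$ evaluated at $x$, and $\mathrm{B}_{k,i}(y,z)=-\sup_x\{\psi^i(x,y)-\mathrm{S}_{k,i}(x,z)\}=-\tfrac12[y;z]^T\Theta_{k,i}[y;z]$, with $\Theta_{k,i}=\begin{bmatrix}\Theta_{k,i}^{11}&\Theta_{k,i}^{12}\\\Theta_{k,i}^{21}&\Theta_{k,i}^{22}\end{bmatrix}$ symmetric ($n\times n$ blocks). These matrices satisfy $\Theta_{k_1+k_2,i}=\Theta_{k_1,i}\circledast\Theta_{k_2,i}$, where for symmetric $\Omega_1,\Omega_2\in\mathbb{R}^{2n\times2n}$ with $\Omega_1^{22}+\Omega_2^{11}>0$, $\Omega_1\circledast\Omega_2=\begin{bmatrix}\Omega_1^{11}&0\\0&\Omega_2^{22}\end{bmatrix}-\begin{bmatrix}\Omega_1^{12}\\\Omega_2^{21}\end{bmatrix}(\Omega_1^{22}+\Omega_2^{11})^{-1}\begin{bmatrix}\Omega_1^{21}&\Omega_2^{12}\end{bmatrix}$. *)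

(* Defs.v *)
From mathcomp Require Import all_boot all_order all_algebra.
Set Implicit Arguments. Unset Strict Implicit. Unset Printing Implicit Defensive.
Import Order.TTheory GRing.Theory Num.Theory.
Local Open Scope ring_scope.

Section Defs.
Variable R : realFieldType.

Definition qform n (A : 'M[R]_n) (v : 'cV[R]_n) : R := (v^T *m A *m v) 0 0.

Definition lemx n (A B : 'M[R]_n) : Prop := forall v : 'cV[R]_n, 0 <= qform (B - A) v.

Definition posdefmx n (A : 'M[R]_n) : Prop :=
  forall v : 'cV[R]_n, v != 0 -> 0 < qform A v.

Definition blk11 n (O : 'M[R]_(n + n)) : 'M[R]_n := ulsubmx O.
Definition blk12 n (O : 'M[R]_(n + n)) : 'M[R]_n := ursubmx O.
Definition blk21 n (O : 'M[R]_(n + n)) : 'M[R]_n := dlsubmx O.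
Definition blk22 n (O : 'M[R]_(n + n)) : 'M[R]_n := drsubmx O.

Definition circ_star n (O1 O2 : 'M[R]_(n + n)) : 'M[R]_(n + n) :=
  block_mx (blk11 O1) 0 0 (blk22 O2)
  - col_mx (blk12 O1) (blk21 O2) *m invmx (blk22 O1 + blk11 O2)
      *m row_mx (blk21 O1) (blk12 O2).

End Defs.

(* Main.v *)
Set Warnings "-notation-overridden,-ambiguous-paths".
Require Import Defs.
From mathcomp Require Import all_boot all_order all_algebra.
From mathcomp Require Import ring lra.
Set Implicit Arguments. Unset Strict Implicit. Unset Printing Implicit Defensive.
Import Order.TTheory GRing.Theory Num.Theory.
Local Open Scope ring_scope.

Section Aux.
Variable R : realFieldType.
Variable n : nat.
Implicit Types (u v w : 'cV[R]_n) (A B M : 'M[R]_n).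

Definition dot u v : R := (u^T *m v) 0 0.

Lemma dotE u v : dot u v = \sum_i u i 0 * v i 0.
Proof. by rewrite /dot !mxE; apply: eq_bigr => i _; rewrite mxE. Qed.

Lemma dotC u v : dot u v = dot v u.
Proof. by rewrite !dotE; apply: eq_bigr => i _; rewrite mulrC. Qed.

Lemma dotDr u v w : dot u (v + w) = dot u v + dot u w.
Proof. by rewrite !dotE -big_split; apply: eq_bigr => i _; rewrite mxE mulrDr. Qed.

Lemma dotNr u v : dot u (- v) = - dot u v.
Proof. by rewrite !dotE -sumrN; apply: eq_bigr => i _; rewrite mxE mulrN. Qed.

Lemma dotBr u v w : dot u (v - w) = dot u v - dot u w.
Proof. by rewrite dotDr dotNr. Qed.

Lemma dotZr u v c : dot u (c *: v) = c * dot u v.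
Proof. by rewrite !dotE mulr_sumr; apply: eq_bigr => i _; rewrite mxE mulrCA. Qed.

Lemma dotDl u v w : dot (v + w) u = dot v u + dot w u.
Proof. by rewrite ![dot _ u]dotC dotDr. Qed.

Lemma dotZl u v c : dot (c *: v) u = c * dot v u.
Proof. by rewrite ![dot _ u]dotC dotZr. Qed.

Lemma dot_mul u A v : dot u (A *m v) = dot (A^T *m u) v.
Proof. by rewrite /dot trmx_mul trmxK mulmxA. Qed.

Lemma dot_ge0 v : 0 <= dot v v.
Proof. rewrite dotE; apply: sumr_ge0 => i _; rewrite -expr2; exact: sqr_ge0. Qed.

Lemma dot_eq0 v : dot v v = 0 -> v = 0.
Proof.
rewrite dotE => H; apply/matrixP => i j; rewrite (ord1 j) mxE.
have hp : forall k : 'I_n, xpredT k -> 0 <= v k 0 * v k 0.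
  by move=> k _; rewrite -expr2; exact: sqr_ge0.
have h := @psumr_eq0P _ _ xpredT (fun k => v k 0 * v k 0) hp H i isT.
by apply/eqP; rewrite -sqrf_eq0 expr2 h.
Qed.

Lemma qformE A v : qform A v = dot v (A *m v).
Proof. by rewrite /qform /dot mulmxA. Qed.

Lemma qformB A B v : qform (A - B) v = qform A v - qform B v.
Proof. by rewrite !qformE mulmxBl dotBr. Qed.

Lemma qformD A B v : qform (A + B) v = qform A v + qform B v.
Proof. by rewrite !qformE mulmxDl dotDr. Qed.

Lemma qformN A v : qform (- A) v = - qform A v.
Proof. by rewrite !qformE mulNmx dotNr. Qed.

Lemma qformS c v : qform c%:M v = c * dot v v.
Proof. by rewrite qformE mul_scalar_mx dotZr. Qed.

Lemma lower_sq rho M w : 0 < rho -> lemx rho%:M M ->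
  rho * dot w (M *m w) <= dot (M *m w) (M *m w) /\ rho * dot w w <= dot w (M *m w).
Proof.
move=> hr H; have H1 := H w; rewrite qformB qformS qformE subr_ge0 in H1.
split=> //.
set D := M - rho%:M.
have eM : M *m w = D *m w + rho *: w by rewrite /D mulmxBl mul_scalar_mx subrK.
have h1 : 0 <= dot w (D *m w) by rewrite /D mulmxBl mul_scalar_mx dotBr dotZr subr_ge0.
have h2 := dot_ge0 (D *m w).
rewrite eM !dotDr !dotDl !dotZr !dotZl (dotC (D *m w) w).
rewrite -subr_ge0.
have -> : dot (D *m w) (D *m w) + rho * dot w (D *m w) +
   (rho * dot w (D *m w) + rho * (rho * dot w w)) -
   rho * (dot w (D *m w) + rho * dot w w) =
   dot (D *m w) (D *m w) + rho * dot w (D *m w) by ring.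
by apply: addr_ge0 => //; apply: mulr_ge0 => //; apply: ltW.
Qed.

Lemma lower_unit rho M : 0 < rho -> lemx rho%:M M -> M \in unitmx.
Proof.
move=> hr H; rewrite -unitmx_tr unitmxE unitfE; apply/negP => /det0P [v v0 vM].
have Mw : M *m v^T = 0 by rewrite -[M]trmxK -trmx_mul vM trmx0.
have [_ h] := lower_sq (v^T) hr H; have d0 : dot v^T 0 = 0 by rewrite /dot mulmx0 mxE.
rewrite Mw d0 in h.
have : dot v^T v^T = 0.
  apply/eqP; rewrite eq_le dot_ge0 andbT.
  by move: h; rewrite pmulr_rle0.
by move/dot_eq0/(congr1 trmx); rewrite trmxK trmx0 => ve; rewrite ve eqxx in v0.
Qed.


Lemma invM_eq M u : M \in unitmx -> M *m (invmx M *m u) = u.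
Proof. by move=> hM; rewrite mulmxA mulmxV // mul1mx. Qed.

Lemma lemA rho M (X A : 'M[R]_n) : 0 < rho -> lemx rho%:M M ->
  lemx (A - X *m invmx M *m X^T) A.
Proof.
move=> hr H v.
have -> : A - (A - X *m invmx M *m X^T) = X *m invmx M *m X^T.
  by rewrite opprB addrC subrK.
rewrite qformE -!mulmxA dot_mul.
set u := X^T *m v.
have hM := lower_unit hr H.
have e := invM_eq u hM.
rewrite -{1}e dotC.
have [_ h] := lower_sq (invmx M *m u) hr H.
apply: le_trans h; apply: mulr_ge0; [exact: ltW | exact: dot_ge0].
Qed.

Lemma lemB rho sigma M (X C : 'M[R]_n) : 0 < rho -> M^T = M -> lemx rho%:M M ->
  lemx (C *m C^T) sigma%:M -> sigma <= rho ^+ 2 ->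
  lemx ((- (X *m invmx M *m C)) *m (- (C^T *m invmx M *m X^T))) (X *m X^T).
Proof.
move=> hr hT H HC hs v.
rewrite mulNmx mulmxN opprK qformB !qformE subr_ge0.
rewrite -!mulmxA !(dot_mul v X).
set u := X^T *m v.
have hM := lower_unit hr H.
set w := invmx M *m u.
have e : M *m w = u := invM_eq u hM.
rewrite (dot_mul u (invmx M)) trmx_inv hT -/w.
have h1 := HC w; rewrite qformB qformS qformE subr_ge0 -mulmxA in h1.
apply: (le_trans h1).
have [h2 h3] := lower_sq w hr H.
rewrite -e; apply: le_trans h2.
have hd := dot_ge0 w.
apply: (le_trans (ler_wpM2r hd hs)).
rewrite expr2 -mulrA; apply: ler_wpM2l => //; exact: ltW.
Qed.

Lemma lemC rho sigma N (C : 'M[R]_n) v : 0 < rho -> lemx rho%:M N ->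
  lemx (C^T *m C) sigma%:M ->
  qform (C^T *m invmx N *m C) v <= sigma / rho * dot v v.
Proof.
move=> hr H HC.
rewrite qformE -!mulmxA dot_mul trmxK.
set u := C *m v.
have hM := lower_unit hr H.
set w := invmx N *m u.
have e : N *m w = u := invM_eq u hM.
rewrite -{1}e dotC mulrAC ler_pdivlMr // mulrC.
have [h2 _] := lower_sq w hr H.
apply: (le_trans h2); rewrite e /u (dot_mul (C *m v) C) dotC mulmxA -qformE.
by have := HC v; rewrite qformB qformS subr_ge0.
Qed.

Lemma circ_blocks (O1 O2 : 'M[R]_(n + n)) :
  let Mi := invmx (blk22 O1 + blk11 O2) in
  [/\ blk11 (circ_star O1 O2) = blk11 O1 - blk12 O1 *m Mi *m blk21 O1,
      blk22 (circ_star O1 O2) = blk22 O2 - blk21 O2 *m Mi *m blk12 O2,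
      blk12 (circ_star O1 O2) = - (blk12 O1 *m Mi *m blk12 O2) &
      blk21 (circ_star O1 O2) = - (blk21 O2 *m Mi *m blk21 O1)].
Proof.
rewrite /circ_star mul_col_mx mul_col_row opp_block_mx add_block_mx.
by rewrite /blk11 /blk22 /blk12 /blk21 block_mxKul block_mxKur block_mxKdl block_mxKdr !add0r.
Qed.

End Aux.

Unset Implicit Arguments.

(* Theta k stands for Theta_{k,i} (i in {1,2,3} fixed), k >= 1. *)
Theorem theorem4p3 (R : realFieldType) (n : nat)
  (Theta : nat -> 'M[R]_(n + n))
  (Hsym : forall k, (0 < k)%N -> (Theta k)^T = Theta k)
  (Hsemi : forall k1 k2, (0 < k1)%N -> (0 < k2)%N ->
     posdefmx (blk22 (Theta k1) + blk11 (Theta k2)) /\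
     Theta (k1 + k2)%N = circ_star (Theta k1) (Theta k2))
  (sigma lambda rho : R)
  (Hsigma : 0 < sigma) (Hlambda : 0 < lambda) (Hrho : 0 < rho)
  (Hs1 : rho ^- 2 * sigma < 1)
  (Hrl : rho <= lambda - 2 * rho^-1 * sigma * (1 - rho ^- 2 * sigma)^-1)
  (p : nat) (Hp : (0 < p)%N)
  (H12 : lemx (blk12 (Theta p) *m blk21 (Theta p)) (sigma%:M))
  (H21 : lemx (blk21 (Theta p) *m blk12 (Theta p)) (sigma%:M))
  (Hdiag : lemx (lambda%:M) (blk11 (Theta p) + blk22 (Theta p))) :
  forall k : nat, (0 < k)%N ->
    lemx (blk11 (Theta (k.+1 * p)%N)) (blk11 (Theta (k * p)%N)) /\
    lemx (blk22 (Theta (k.+1 * p)%N)) (blk22 (Theta (k * p)%N)) /\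
    lemx (blk12 (Theta (k.+1 * p)%N) *m blk21 (Theta (k.+1 * p)%N))
         (blk12 (Theta (k * p)%N) *m blk21 (Theta (k * p)%N)) /\
    lemx (blk21 (Theta (k.+1 * p)%N) *m blk12 (Theta (k.+1 * p)%N))
         (blk21 (Theta (k * p)%N) *m blk12 (Theta (k * p)%N)).
Proof.
have tr12 : forall k, (0 < k)%N -> (blk12 (Theta k))^T = blk21 (Theta k).
  by move=> k hk; rewrite /blk12 /blk21 trmx_ursub Hsym.
have tr21 : forall k, (0 < k)%N -> (blk21 (Theta k))^T = blk12 (Theta k).
  by move=> k hk; rewrite -tr12 // trmxK.
have tr11 : forall k, (0 < k)%N -> (blk11 (Theta k))^T = blk11 (Theta k).
  by move=> k hk; rewrite /blk11 trmx_ulsub Hsym.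
have tr22 : forall k, (0 < k)%N -> (blk22 (Theta k))^T = blk22 (Theta k).
  by move=> k hk; rewrite /blk22 trmx_drsub Hsym.
have hx : 0 < rho ^- 2 * sigma by apply: mulr_gt0 => //; rewrite invr_gt0 exprn_gt0.
have hinv : 1 <= (1 - rho ^- 2 * sigma)^-1.
  by rewrite invf_ge1; lra.
have ha : 0 < rho^-1 * sigma by apply: mulr_gt0 => //; rewrite invr_gt0.
have ht : rho^-1 * sigma <= 2 * rho^-1 * sigma * (1 - rho ^- 2 * sigma)^-1.
  rewrite -mulrA; nra.
have hlr : rho <= lambda by lra.
have hlr2 : rho <= lambda - sigma / rho by rewrite mulrC; lra.
have hsr : sigma <= rho ^+ 2.
  have : rho ^+ 2 * (rho ^- 2 * sigma) <= rho ^+ 2 * 1.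
    by apply: ler_wpM2l; [apply: exprn_ge0; exact: ltW | exact: ltW].
  by rewrite mulr1 mulrA mulrV ?mul1r // unitfE expf_neq0 // gt_eqF.
have H21' : lemx ((blk12 (Theta p))^T *m blk12 (Theta p)) sigma%:M.
  by rewrite tr12.
have H12' : lemx ((blk21 (Theta p))^T *m blk21 (Theta p)) sigma%:M.
  by rewrite tr21.
have kp0 : forall k, (0 < k)%N -> (0 < k * p)%N by move=> k hk; rewrite muln_gt0 hk.
have IH : forall k, (0 < k)%N ->
   lemx rho%:M (blk22 (Theta (k * p)%N) + blk11 (Theta p)) /\
   lemx rho%:M (blk22 (Theta p) + blk11 (Theta (k * p)%N)).
  elim=> [//|k IHk] _.
  case: (posnP k) => [->|hk].
    rewrite mul1n; split=> v; have := Hdiag v;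
      rewrite !qformB !qformD !qformS => h;
      have := ler_wpM2r (dot_ge0 v) hlr; lra.
  have [IH1 IH2] := IHk hk.
  have hkp := kp0 k hk.
  split.
  - have [_ e] := Hsemi _ _ hkp Hp.
    have [_ e22 _ _] := circ_blocks (Theta (k * p)%N) (Theta p).
    rewrite mulSnr e e22 -tr12 // => v.
    have hC := lemC v Hrho IH1 H21'.
    have := Hdiag v; rewrite !qformB !qformD !qformS => h.
    have := ler_wpM2r (dot_ge0 v) hlr2.
    rewrite mulrBl ?qformB ?qformD ?qformN ?qformS; lra.
  - have [_ e] := Hsemi _ _ Hp hkp.
    have [e11 _ _ _] := circ_blocks (Theta p) (Theta (k * p)%N).
    rewrite mulSn e e11 -[blk12 (Theta p)]tr21 // => v.
    have hC := lemC v Hrho IH2 H12'.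
    have := Hdiag v; rewrite !qformB !qformD !qformS => h.
    have := ler_wpM2r (dot_ge0 v) hlr2.
    rewrite mulrBl ?qformB ?qformD ?qformN ?qformS; lra.
move=> k hk.
have [IH1 IH2] := IH k hk.
have hkp := kp0 k hk.
have [_ e1] := Hsemi _ _ hkp Hp.
have [_ e2] := Hsemi _ _ Hp hkp.
have [a11 a22 a12 a21] := circ_blocks (Theta (k * p)%N) (Theta p).
have [b11 b22 b12 b21] := circ_blocks (Theta p) (Theta (k * p)%N).
have sym1 : (blk22 (Theta (k * p)%N) + blk11 (Theta p))^T =
            blk22 (Theta (k * p)%N) + blk11 (Theta p).
  by rewrite linearD /= tr22 // tr11.
have sym2 : (blk22 (Theta p) + blk11 (Theta (k * p)%N))^T =
            blk22 (Theta p) + blk11 (Theta (k * p)%N).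
  by rewrite linearD /= tr22 // tr11.
split; [|split; [|split]].
- rewrite mulSnr e1 a11 -tr12 //; exact: lemA Hrho IH1.
- rewrite mulSn e2 b22 -tr21 //; exact: lemA Hrho IH2.
- rewrite mulSnr e1 a12 a21 -(tr12 (k * p)%N) // -(tr12 p) //.
  apply: lemB Hrho sym1 IH1 _ hsr.
  by rewrite tr12.
- rewrite mulSn e2 b12 b21 -(tr21 (k * p)%N) // -(tr21 p) //.
  apply: lemB Hrho sym2 IH2 _ hsr.
  by rewrite tr21.
Qed.
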